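(* Let $N\ge0$ and $j\ge1$ be integers and let $$E(N,j)=\frac{(-1)^j2}{\binom{2N+j+1}{j-1}}\sum_{i=0}^{2N}(-1)^i\Big(2^i-\binom iN\Big)\frac{2N+j-i}{i+1}\sum_{\ell=0}^i(-1)^\ell\binom{2N+j}{i-\ell}\binom{\ell+j-1}{\ell}\frac1{2N+\ell+j+2}+\frac{(-1)^{N+j}}{(N+1)\binom{2N+j+1}{j-1}}+\frac{(-1)^j(j-1)N!(N+j-1)!}{(2N+j+1)!}.$$ Then $$\frac{(-1)^{j+1}E(N,j)}{(2N+j)!}=\frac{(j-1)(2N+1)!}{(4N+j+3)!}\Big(\frac{2(2N+1)!}{N!(N+1)!}-2^{2N+2}\Big)-\frac{(2N+2)!}{(4N+j+3)!}\Big(\frac{4(2N+1)!}{N!(N+1)!}+2^{2N+3}\Big)-\frac{(j-1)(N+j-1)!N!}{(2N+j)!(2N+j+1)!}+\frac{2(j-1)(2N+2)!}{(2N+j+1)!(N+1)!}\sum_{h=N}^{2N+1}\frac{(h+j-1)!(h+1)!}{(h-N)!(2N+j+h+2)!}.$$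
   Context: Binomial coefficients $\binom mk$ with $k<0$ or $k>m\ge0$ are zero. *)

(* Defs.v *)
From mathcomp Require Import all_boot all_order all_algebra.
Set Implicit Arguments. Unset Strict Implicit. Unset Printing Implicit Defensive.
Import Order.TTheory GRing.Theory Num.Theory.
Local Open Scope ring_scope.

(* E(N,j) as in the paper; nat subtractions are never truncated in the
   ranges used (i <= 2N, l <= i, j >= 1). *)
Definition E (N j : nat) : rat :=
  let c : rat := ('C(2*N + j + 1, j - 1))%:R in
  (-1) ^+ j * 2 / c *
    (\sum_(0 <= i < (2*N).+1)
       (-1) ^+ i * (2 ^+ i - ('C(i, N))%:R) * ((2*N + j - i)%:R / (i.+1)%:R) *
       \sum_(0 <= l < i.+1)
          (-1) ^+ l * ('C(2*N + j, i - l))%:R * ('C(l + j - 1, l))%:R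
            / ((2*N + l + j + 2)%:R))
  + (-1) ^+ (N + j) / ((N.+1)%:R * c)
  + (-1) ^+ j * ((j - 1)%:R * (N`!)%:R * ((N + j - 1)`!)%:R) / (((2*N + j + 1)`!)%:R).

(* Main.v *)
Require Import Defs.
From mathcomp Require Import all_boot all_order all_algebra.
From mathcomp Require Import ring lra zify.
Import Order.TTheory GRing.Theory Num.Theory.
Local Open Scope ring_scope.

Lemma nge0 (n : nat) : 0 <= (n%:R : rat). Proof. exact: ler0n. Qed.
Ltac addpos := repeat match goal with
 | n : nat |- _ => lazymatch goal with
     | H : is_true (@Order.le _ _ 0 (@GRing.natmul _ (@GRing.one _) n)) |- _ => fail
     | _ => have := nge0 n; move=> ? end end.
Ltac nzsolve := first [ lra | (rewrite pnatr_eq0 -lt0n; first [apply: fact_gt0 | lia])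
  | (rewrite -?natrD -?natrM pnatr_eq0; lia) ].
Ltac fsolve := field; addpos; rewrite ?andbT; repeat (apply/andP; split); try nzsolve.

Lemma fstep j l : (-1)^+l.+1 * ('C(l.+1 + j.+1 - 1, l.+1))%:R
  + (-1)^+l * ('C(l + j.+1 - 1, l))%:R
  = (-1)^+l.+1 * ('C(l.+1 + j - 1, l.+1))%:R :> rat.
Proof.
rewrite (_ : (l.+1 + j.+1 - 1 = (l+j).+1)%N); last lia.
rewrite (_ : (l + j.+1 - 1 = (l+j))%N); last lia.
rewrite (_ : (l.+1 + j - 1 = (l+j))%N); last lia.
rewrite binS natrD exprS; ring.
Qed.

Lemma vneg a j i : \sum_(0 <= l < i.+1) (-1)^+l * ('C(l+j-1,l))%:R * ('C(a+j, i-l))%:R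
   = ('C(a,i))%:R :> rat.
Proof.
elim: j i => [|j IH] i.
  rewrite big_nat_recl // big1_seq ?addr0 /=.
    by rewrite expr0 mul1r bin0 mul1r addn0 subn0.
  move=> l _; rewrite (_ : (l.+1 + 0 - 1 = l)%N); last lia.
  by rewrite bin_small // mulr0 mul0r.
case: i => [|i].
  by rewrite big_nat1 expr0 !bin0 !mul1r.
rewrite big_nat_recr //=.
rewrite (eq_big_nat _ _ (F2 := fun l => (-1)^+l * ('C(l+j.+1-1,l))%:R * ('C(a+j, i.+1-l))%:R
   + (-1)^+l * ('C(l+j.+1-1,l))%:R * ('C(a+j, i-l))%:R)); last first.
  move=> l /andP [_ hl].
  rewrite (_ : (i.+1 - l = (i-l).+1)%N); last lia.
  by rewrite [(a + j.+1)%N]addnS binS natrD mulrDr.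
rewrite big_split /= -addrA addrC -addrA.
have -> : (-1) ^+ i.+1 * ('C(i.+1 + j.+1 - 1, i.+1))%:R * ('C(a + j.+1, i.+1 - i.+1))%:R
   + \sum_(0 <= l < i.+1) (-1)^+l * ('C(l+j.+1-1,l))%:R * ('C(a+j, i.+1-l))%:R
   = \sum_(0 <= l < i.+2) (-1)^+l * ('C(l+j.+1-1,l))%:R * ('C(a+j, i.+1-l))%:R :> rat.
  by rewrite (big_nat_recr i.+1) //= subnn !bin0 addrC.
rewrite (big_nat_recl i.+1) // subn0 addrCA -big_split /=.
rewrite -(IH i.+1) (big_nat_recl i.+1) // subn0.
congr (_ + _).
  by rewrite !expr0 !mul1r !bin0.
apply: eq_big_nat => l _.
rewrite subSS addrC -mulrDl; congr (_ * _).
by rewrite fstep.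
Qed.

Definition Sx (N j i : nat) : rat := \sum_(0 <= l < i.+1)
  (-1) ^+ l * ('C(2*N + j, i - l))%:R * ('C(l + j - 1, l))%:R / ((2*N + l + j + 2)%:R).

Lemma pt_nat M k l : ((k+l+M+3) * 'C(M,k.+1) + (k+l+2) * 'C(M,k) = (M+l+2) * 'C(M.+1,k.+1))%N.
Proof.
case: (leqP k M) => hk.
  have h := mul_bin_left M k.
  rewrite binS. nia.
rewrite !bin_small //; lia.
Qed.

Lemma Srec N j i : ((i + 2*N + j + 3)%:R) * Sx N j i.+1 + (i.+2)%:R * Sx N j i
  = ('C(2*N+1, i.+1))%:R.
Proof.
rewrite /Sx big_nat_recr //= mulrDr addrAC !big_distrr -big_split /=.
rewrite -(vneg (2*N+1) j i.+1) (big_nat_recr i.+1) //=.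
congr (_ + _); last first.
  rewrite subnn !bin0 (_ : (2 * N + i.+1 + j + 2 = i + 2 * N + j + 3)%N); last lia.
  by fsolve.
apply: eq_big_nat => l /andP [_ hl].
have [k ->] : exists k, i = (k + l)%N by exists (i - l)%N; lia.
rewrite (_ : ((k + l).+1 - l = k.+1)%N); last lia.
rewrite (_ : (k + l - l = k)%N); last lia.
rewrite (_ : (2*N+1+j = (2*N+j).+1)%N); last lia.
have hz : ('C((2*N+j).+1, k.+1))%:R = ((k+l+(2*N+j)+3)%:R * ('C(2*N+j,k.+1))%:R
   + (k+l+2)%:R * ('C(2*N+j,k))%:R) / ((2*N+j)+l+2)%:R :> rat.
  by rewrite -!natrM -natrD pt_nat natrM; fsolve.
rewrite hz (_ : ((k + l).+2 = k + l + 2)%N); last lia.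
rewrite (_ : (2 * N + l + j + 2 = 2*N+j + l + 2)%N); last lia.
rewrite (_ : (k + l + 2 * N + j + 3 = k + l + (2 * N + j) + 3)%N); last lia.
by fsolve.
Qed.


Lemma factSr n : ((n.+1)`!)%:R = (n.+1)%:R * (n`!)%:R :> rat.
Proof. by rewrite factS natrM. Qed.

Lemma fact_neq0 n : (n`!)%:R != 0 :> rat.
Proof. by rewrite pnatr_eq0 -lt0n fact_gt0. Qed.

Definition dl (N j k : nat) : rat :=
  (-1)^+k * ('C(2*N+1,k))%:R * ((k + 2*N + j + 1)`!)%:R / ((k.+1)`!)%:R.

Lemma Sclosed N j i : Sx N j i = (-1)^+i * ((i.+1)`!)%:R / ((i + 2*N + j + 2)`!)%:R
   * \sum_(0 <= k < i.+1) dl N j k.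
Proof.
elim: i => [|i IH].
  rewrite /Sx !big_nat1 /dl !expr0 !bin0 !mul1r !add0n.
  rewrite (_ : (2 * N + j + 2 = (2*N+j+1).+1)%N); last lia.
  rewrite (_ : (2 * N + 0 + j + 2 = (2*N+j+1).+1)%N); last lia.
  rewrite factSr (factSr 0) fact0.
  have := fact_neq0 (2*N+j+1). move: (2*N+j+1)%N => m hm. fsolve.
have h := Srec N j i.
have e : Sx N j i.+1 = (('C(2 * N + 1, i.+1))%:R - (i.+2)%:R * Sx N j i) / (i + 2 * N + j + 3)%:R.
  by rewrite -h; fsolve.
rewrite e IH (big_nat_recr i.+1) //= /dl.
rewrite (_ : (i.+1 + 2 * N + j + 1 = i + 2*N + j + 2)%N); last lia.
rewrite (_ : (i.+1 + 2 * N + j + 2 = (i + 2*N + j + 2).+1)%N); last lia.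
rewrite (factSr (i + 2 * N + j + 2)) (factSr i.+1).
have := fact_neq0 (i + 2 * N + j + 2). have := fact_neq0 i.+1.
move: (\sum_(0 <= k < i.+1) _) => Q.
rewrite -[(-1)^+i.+1]signr_odd -[(-1)^+i]signr_odd /=.
case: (odd i) => /= h1 h2; rewrite ?expr0 ?expr1.
  rewrite (_ : (i + 2 * N + j + 2).+1 = i + 2 * N + j + 3)%N; last lia.
  fsolve.
rewrite (_ : (i + 2 * N + j + 2).+1 = i + 2 * N + j + 3)%N; last lia.
fsolve.
Qed.

Lemma lin_hyp (A B X Y : rat) : X = Y -> A - B = X - Y -> A = B.
Proof. by move=> -> /eqP; rewrite subrr subr_eq0 => /eqP. Qed.

Lemma lin_hypk (A B X Y k : rat) : X = Y -> A - B = k * (X - Y) -> A = B.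
Proof. by move=> -> /eqP; rewrite subrr mulr0 subr_eq0 => /eqP. Qed.

Lemma ibin i s : (i * 'C(i,s) = s.+1 * 'C(i,s.+1) + s * 'C(i,s))%N.
Proof.
have h := mul_bin_left i s.
case: (leqP s i) => hs; first nia.
by rewrite !bin_small //; lia.
Qed.

Lemma pterm M i s : (i.+1)%:R * ('C(i.+1,s))%:R - (i + M + 2)%:R * ('C(i,s))%:R
  = (s%:R - M%:R - 1) * ('C(i,s))%:R + s%:R * ('C(i,s.-1))%:R :> rat.
Proof.
case: s => [|s].
  rewrite !bin0 mul0r; fsolve.
have h : (i * 'C(i,s))%:R = (s.+1 * 'C(i,s.+1) + s * 'C(i,s))%:R :> rat by rewrite ibin.
rewrite !natrD !natrM in h.
rewrite binS (_ : s.+1.-1 = s) // !natrD.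
refine (lin_hyp _ _ _ _ h _); ring.
Qed.

Lemma binNr i N : (N.+1)%:R * ('C(i,N.+1))%:R = (i%:R - N%:R) * ('C(i,N))%:R :> rat.
Proof.
have h := mul_bin_left i N.
case: (leqP N i) => hs.
  by rewrite -natrM h natrM natrB.
by rewrite !bin_small ?mulr0 //; lia.
Qed.

Definition qq (N j k : nat) : rat :=
  (N.+1)%:R / (N + j)%:R * ('C(k, N.+1))%:R
  - (j%:R - 1) / ((N + j)%:R * ('C(2*N+j, N))%:R) *
    \sum_(0 <= s < N.+1) ('C(2*N+j+1, s))%:R * ('C(k, s))%:R.

Lemma gos1 N j i : (1 <= j)%N ->
  (i.+1)%:R * qq N j i.+1 - (i + (2*N+j) + 2)%:R * qq N j i
  = ('C(i,N))%:R * ((2*N+j)%:R - i%:R).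
Proof.
move=> hj.
set M := (2*N+j)%N.
have hsum : \sum_(0 <= s < N.+1) ('C(M+1, s))%:R *
     ((i.+1)%:R * ('C(i.+1,s))%:R - (i + M + 2)%:R * ('C(i,s))%:R)
   = - (N.+1)%:R * ('C(M+1,N.+1))%:R * ('C(i,N))%:R :> rat.
  pose g s : rat := s%:R * ('C(M+1, s))%:R * ('C(i, s.-1))%:R.
  rewrite (eq_big_nat _ _ (F2 := fun s => - (g s.+1 - g s))); last first.
    move=> s /andP [_ hs]; rewrite pterm /g /=.
    have h := mul_bin_left (M+1) s.
    rewrite (_ : (M + 1 - s = M - s + 1)%N) in h; last lia.
    move/(congr1 (fun n : nat => n%:R : rat)): h.
    rewrite !natrM natrD natrB; last lia.
    move=> h; rewrite h; fsolve.
  by rewrite sumrN telescope_sumr // /g /= mul0r mul0r subr0 !mulNr.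
rewrite /qq -/M.
set S0 := \sum_(0 <= s < N.+1) _.
set S1 := \sum_(0 <= s < N.+1) _.
have eS : (i.+1)%:R * S0 - (i + M + 2)%:R * S1 = - (N.+1)%:R * ('C(M+1,N.+1))%:R * ('C(i,N))%:R.
  rewrite -hsum /S0 /S1 !big_distrr -sumrB /=.
  by apply: eq_big_nat => s _; ring.
have e1 : ('C(i,N.+1))%:R = (i%:R - N%:R) * ('C(i,N))%:R / (N.+1)%:R :> rat.
  by rewrite -binNr; fsolve.
have e3 : ('C(M+1, N.+1))%:R = (M+1)%:R * ('C(M,N))%:R / (N.+1)%:R :> rat.
  have h : (M.+1 * 'C(M,N))%:R = (N.+1 * 'C(M.+1,N.+1))%:R :> rat.
    by rewrite (mul_bin_diag M.+1 N).
  rewrite !natrM in h; rewrite addn1.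
  refine (lin_hypk _ _ _ _ (- ((N.+1)%:R)^-1) h _); fsolve.
have hC : ('C(M,N))%:R != 0 :> rat by rewrite pnatr_eq0 -lt0n bin_gt0 /M; lia.
have hNj : (N + j)%:R != 0 :> rat by rewrite pnatr_eq0; lia.
have pt := pterm M i N.+1.
rewrite (_ : N.+1.-1 = N) // in pt.
have -> : forall a b c d x y u v : rat, x * (a * u - b * c) - y * (a * v - b * d)
   = a * (x * u - y * v) - b * (x * c - y * d) by move=> *; ring.
rewrite eS pt e1 e3.
move: hC hNj; rewrite /M; move: ('C(2 * N + j, N))%:R ('C(i, N))%:R => c d hC hNj.
fsolve.
Qed.


Lemma altstep n (f : nat -> rat) :
  \sum_(0 <= k < n.+2) (-1)^+k * ('C(n.+1,k))%:R * f k
  = \sum_(0 <= k < n.+1) (-1)^+k * ('C(n,k))%:R * (f k - f k.+1).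
Proof.
pose g k := (-1)^+k * ('C(n,k))%:R * f k.
have eA : \sum_(0 <= k < n.+2) g k = \sum_(0 <= k < n.+1) g k.
  by rewrite big_nat_recr //= /g bin_small // mulr0 mul0r addr0.
rewrite big_nat_recl //.
rewrite (eq_big_nat _ _ (F2 := fun k => g k.+1 - (-1)^+k * ('C(n,k))%:R * f k.+1)); last first.
  by move=> k _; rewrite /g binS natrD exprS; ring.
rewrite sumrB addrA.
have -> : (-1) ^+ 0 * ('C(n.+1, 0))%:R * f 0%N = g 0%N by rewrite /g !bin0.
rewrite -big_nat_recl // eA /g -sumrB.
by apply: eq_big_nat => k _; ring.
Qed.

Lemma altC n a b : (n <= b)%N ->
  \sum_(0 <= k < n.+1) (-1)^+k * ('C(n,k))%:R * ('C(k+a,b))%:R = (-1)^+n * ('C(a, b - n))%:R :> rat.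
Proof.
elim: n a b => [|n IH] a b hb.
  by rewrite big_nat1 expr0 bin0 !mul1r add0n subn0.
case: b hb => [|b] hb //.
rewrite (altstep n (fun k => ('C(k+a,b.+1))%:R)).
rewrite (eq_big_nat _ _ (F2 := fun k => - ((-1)^+k * ('C(n,k))%:R * ('C(k+a,b))%:R))); last first.
  by move=> k _; rewrite addSn binS natrD; ring.
by rewrite sumrN IH // exprS subSS; ring.
Qed.

Lemma Zlem m s : \sum_(0 <= i < m.+1) (-1)^+i * ('C(m,i))%:R * ('C(i,s))%:R
  = if m == s then (-1)^+m else 0 :> rat.
Proof.
elim: m s => [|m IH] s.
  by rewrite big_nat1 expr0 !bin0 mul1r bin0n; case: s.
rewrite (altstep m (fun i => ('C(i,s))%:R)).
case: s => [|s].
  by rewrite big1_seq // => k _; rewrite !bin0 subrr mulr0.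
rewrite (eq_big_nat _ _ (F2 := fun k => - ((-1)^+k * ('C(m,k))%:R * ('C(k,s))%:R))); last first.
  by move=> k _; rewrite binS natrD; ring.
rewrite sumrN IH eqSS; case: (m == s); rewrite ?oppr0 // exprS; ring.
Qed.

Lemma Ylem n s : (s <= n)%N ->
  \sum_(0 <= i < n.+1) (-1)^+i * ('C(n.+1,i.+1))%:R * ('C(i,s))%:R = (-1)^+s :> rat.
Proof.
elim: n s => [|n IH] s hs.
  case: s hs => // _; rewrite big_nat1. by [].
rewrite (eq_big_nat _ _ (F2 := fun i => (-1)^+i * ('C(n.+1,i.+1))%:R * ('C(i,s))%:R
   + (-1)^+i * ('C(n.+1,i))%:R * ('C(i,s))%:R)); last first.
  by move=> i _; rewrite binS natrD; ring.
rewrite big_split /= Zlem big_nat_recr //= bin_small // mulr0 mul0r addr0.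
case: (leqP s n) => hsn.
  rewrite IH //; case: eqP => [e|]; last by rewrite addr0.
  lia.
have -> : s = n.+1 by lia.
rewrite eqxx big1_seq ?add0r // => i /andP [_ ]; rewrite mem_index_iota => /andP [_ hi].
by rewrite (bin_small hi) mulr0.
Qed.

Lemma L5 n s : (s <= n)%N ->
  \sum_(0 <= i < n.+1) (-1)^+i * ('C(n,i))%:R * ('C(i,s))%:R / (i.+1)%:R = (-1)^+s / (n.+1)%:R :> rat.
Proof.
move=> hs; rewrite -(@Ylem n s hs) mulr_suml.
apply: eq_big_nat => i _.
have h : (n.+1 * 'C(n,i))%:R = (i.+1 * 'C(n.+1,i.+1))%:R :> rat by rewrite -mul_bin_diag.
rewrite !natrM in h.
have h1 : ('C(n,i))%:R = (i.+1)%:R * ('C(n.+1,i.+1))%:R / (n.+1)%:R :> rat.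
  by rewrite -h; fsolve.
by rewrite h1; fsolve.
Qed.

Lemma L6 a N : \sum_(0 <= s < N.+1) (-1)^+s * ('C(a.+1,s))%:R = (-1)^+N * ('C(a,N))%:R :> rat.
Proof.
elim: N => [|N IH]; first by rewrite big_nat1 !bin0.
by rewrite big_nat_recr //= IH binS natrD exprS; ring.
Qed.

Lemma P4 n : odd n ->
  \sum_(0 <= i < n.+1) (-1)^+i * ('C(n,i))%:R * 2^+i / (i.+1)%:R = 0 :> rat.
Proof.
move=> hn.
have e : forall i, ('C(n,i))%:R = (i.+1)%:R * ('C(n.+1,i.+1))%:R / (n.+1)%:R :> rat.
  move=> i; have h : (n.+1 * 'C(n,i))%:R = (i.+1 * 'C(n.+1,i.+1))%:R :> rat by rewrite -mul_bin_diag.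
  rewrite !natrM in h.
  by rewrite -h; fsolve.
have h2 : \sum_(0 <= i < n.+2) (-2 : rat)^+i *+ 'C(n.+1,i) = 1.
  rewrite big_mkord -exprD1n (_ : (-2 + 1 = -1 :> rat)); last by [].
  by rewrite -signr_odd /= hn.
rewrite big_nat_recl // expr0 bin0 mulr1n in h2.
have h3 : \sum_(0 <= i < n.+1) (-2 : rat)^+i.+1 *+ 'C(n.+1,i.+1) = 0.
  by apply: (addrI 1); rewrite h2 addr0.
rewrite (eq_big_nat _ _ (F2 := fun i => - (2 * (n.+1)%:R)^-1 * ((-2 : rat)^+i.+1 *+ 'C(n.+1,i.+1)))).
  by rewrite -mulr_sumr h3 mulr0.
move=> i _; rewrite e -mulr_natr exprS.
rewrite (_ : (-2 : rat) ^+ i = (-1)^+i * 2^+i); last by rewrite -exprMn mulN1r.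
fsolve.
Qed.


Definition Phi (N j k : nat) : rat :=
  - (2^+k + qq N j k) * ((k`!)%:R) / ((k + 2*N + j + 1)`!)%:R.

Lemma dPhi N j i : (1 <= j)%N -> Phi N j i.+1 - Phi N j i
  = (2^+i - ('C(i,N))%:R) * ((2*N+j)%:R - i%:R) * (i`!)%:R / ((i + 2*N + j + 2)`!)%:R.
Proof.
move=> hj; have g := gos1 N j i hj.
have eq : qq N j i.+1 = (('C(i,N))%:R * ((2*N+j)%:R - i%:R) + (i + (2*N+j) + 2)%:R * qq N j i)
   / (i.+1)%:R by rewrite -g; fsolve.
rewrite /Phi eq.
rewrite (_ : (i.+1 + 2 * N + j + 1 = i + 2*N + j + 2)%N); last lia.
rewrite (_ : (i + 2 * N + j + 2 = (i + 2*N + j + 1).+1)%N); last lia.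
rewrite (factSr (i + 2 * N + j + 1)) (factSr i).
have := fact_neq0 (i + 2 * N + j + 1); have := fact_neq0 i.
move: (qq N j i) ((i + 2 * N + j + 1)`!)%:R (i`!)%:R ('C(i,N))%:R => q a b c ha hb.
rewrite exprS; fsolve.
Qed.

Lemma abel (f d : nat -> rat) m :
  \sum_(0 <= i < m) (f i.+1 - f i) * \sum_(0 <= k < i.+1) d k
  = f m * \sum_(0 <= k < m) d k - \sum_(0 <= i < m) f i * d i.
Proof.
elim: m => [|m IH]; first by rewrite !big_geq // mulr0 subrr.
rewrite !big_nat_recr //= IH; ring.
Qed.

Lemma termE N j i : (1 <= j)%N -> (i <= 2*N)%N ->
  (-1) ^+ i * (2 ^+ i - ('C(i, N))%:R) * ((2*N + j - i)%:R / (i.+1)%:R) * Sx N j i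
  = (Phi N j i.+1 - Phi N j i) * \sum_(0 <= k < i.+1) dl N j k.
Proof.
move=> hj hi.
rewrite Sclosed dPhi // natrB; last lia.
rewrite factSr.
have := fact_neq0 (i + 2 * N + j + 2); have := fact_neq0 i.
move: (\sum_(0 <= k < i.+1) dl N j k) ((i + 2 * N + j + 2)`!)%:R (i`!)%:R => Q a b ha hb.
rewrite -signr_odd; case: (odd i); rewrite /= ?expr0 ?expr1 natrD natrM; fsolve.
Qed.

Lemma sum_dl N j : (1 <= j)%N ->
  \sum_(0 <= k < (2*N+1).+1) dl N j k = - ((2*N+j)`!)%:R * ('C(2*N+j+1, j-1))%:R.
Proof.
move=> hj.
rewrite (eq_big_nat _ _ (F2 := fun k => ((2*N+j)`!)%:R *
   ((-1)^+k * ('C(2*N+1,k))%:R * ('C(k + (2*N+j+1), 2*N+j))%:R))); last first.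
  move=> k _; rewrite /dl.
  have h := bin_fact (leq_addl k.+1 (2*N+j)).
  rewrite (_ : (k.+1 + (2 * N + j) - (2 * N + j) = k.+1)%N) in h; last lia.
  rewrite (_ : (k + 2 * N + j + 1 = k.+1 + (2 * N + j))%N); last lia.
  rewrite (_ : (k + (2 * N + j + 1) = k.+1 + (2 * N + j))%N); last lia.
  rewrite -h !natrM; clear h.
  have := fact_neq0 (2*N+j); have := fact_neq0 k.+1.
  move: ((2*N+j)`!)%:R ((k.+1)`!)%:R => a b ha hb; fsolve.
rewrite -big_distrr /= altC; last lia.
rewrite (_ : (2 * N + j - (2 * N + 1) = j - 1)%N); last lia.
rewrite (_ : ((-1) ^+ (2 * N + 1) = -1 :> rat)); first ring.
by rewrite -signr_odd oddD oddM /= ?andbF ?addbT ?addbF /= ?expr1.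
Qed.

Lemma sum_qq N j : (1 <= j)%N ->
  \sum_(0 <= i < (2*N+1).+1) (-1)^+i * ('C(2*N+1,i))%:R * qq N j i / (i.+1)%:R
  = (-1)^+N.+1 / (2*N+2)%:R.
Proof.
move=> hj.
rewrite /qq.
rewrite (eq_big_nat _ _ (F2 := fun i => (N.+1)%:R / (N + j)%:R *
     ((-1)^+i * ('C(2*N+1,i))%:R * ('C(i,N.+1))%:R / (i.+1)%:R)
   - (j%:R - 1) / ((N + j)%:R * ('C(2*N+j, N))%:R) *
     \sum_(0 <= s < N.+1) ('C(2*N+j+1, s))%:R *
        ((-1)^+i * ('C(2*N+1,i))%:R * ('C(i,s))%:R / (i.+1)%:R))); last first.
  move=> i _.
  rewrite [X in _ = _ - _ * X](_ : _ = ((-1)^+i * ('C(2*N+1,i))%:R / (i.+1)%:R) *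
     \sum_(0 <= s < N.+1) ('C(2*N+j+1, s))%:R * ('C(i, s))%:R); last first.
    by rewrite mulr_sumr; apply: eq_bigr => s _; ring.
  ring.
rewrite sumrB -!mulr_sumr L5; last lia.
rewrite exchange_big_nat /=.
rewrite (eq_big_nat _ _ (F2 := fun s => ('C(2*N+j+1, s))%:R * ((-1)^+s / (2*N+1).+1%:R))); last first.
  by move=> s /andP [_ hs]; rewrite -mulr_sumr L5 //; lia.
have hs : \sum_(0 <= s < N.+1) ('C(2*N+j+1, s))%:R * ((-1)^+s / (2*N+1).+1%:R)
   = (-1)^+N * ('C(2*N+j,N))%:R / (2*N+1).+1%:R :> rat.
  rewrite -(L6 (2*N+j) N) mulr_suml; apply: eq_big_nat => s _; rewrite addn1; ring.
rewrite hs.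
have hC : ('C(2*N+j,N))%:R != 0 :> rat by rewrite pnatr_eq0 -lt0n bin_gt0; lia.
move: hC; move: ('C(2*N+j,N))%:R => c hc.
rewrite exprS (_ : (2 * N + 2 = (2*N+1).+1)%N); last lia.
rewrite -signr_odd; case: (odd N); rewrite /= ?expr0 ?expr1; fsolve.
Qed.

Lemma Esum N j : (1 <= j)%N ->
  \sum_(0 <= i < (2*N).+1) (-1) ^+ i * (2 ^+ i - ('C(i, N))%:R) * ((2*N + j - i)%:R / (i.+1)%:R) * Sx N j i
  = - ((2*N+j)`!)%:R * ('C(2*N+j+1, j-1))%:R * Phi N j (2*N+1) + (-1)^+N.+1 / (2*N+2)%:R.
Proof.
move=> hj.
rewrite (eq_big_nat _ _ (F2 := fun i => (Phi N j i.+1 - Phi N j i) * \sum_(0 <= k < i.+1) dl N j k)); last first.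
  by move=> i /andP [_ hi]; rewrite termE.
rewrite abel (_ : (2*N).+1 = 2*N+1)%N; last lia.
have e1 : \sum_(0 <= k < 2*N+1) dl N j k = \sum_(0 <= k < (2*N+1).+1) dl N j k - dl N j (2*N+1).
  by rewrite big_nat_recr //= addrK.
have e2 : \sum_(0 <= k < 2*N+1) Phi N j k * dl N j k
   = \sum_(0 <= k < (2*N+1).+1) Phi N j k * dl N j k - Phi N j (2*N+1) * dl N j (2*N+1).
  by rewrite big_nat_recr //= addrK.
rewrite e1 e2 sum_dl //.
have e3 : \sum_(0 <= k < (2*N+1).+1) Phi N j k * dl N j k
   = - (\sum_(0 <= i < (2*N+1).+1) (-1)^+i * ('C(2*N+1,i))%:R * 2^+i / (i.+1)%:R
      + \sum_(0 <= i < (2*N+1).+1) (-1)^+i * ('C(2*N+1,i))%:R * qq N j i / (i.+1)%:R).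
  rewrite -big_split -sumrN; apply: eq_big_nat => i _ /=.
  rewrite /Phi /dl factSr.
  have := fact_neq0 (i + 2 * N + j + 1); have := fact_neq0 i.
  move: (qq N j i) ((i + 2 * N + j + 1)`!)%:R (i`!)%:R => q a b ha hb.
  fsolve.
rewrite e3 P4; last by rewrite oddD oddM /= ?andbF ?addbT.
rewrite sum_qq //; ring.
Qed.

Lemma pgen X (a b : rat) s : (X%:R + a) * ('C(X.+1,s.+1))%:R - (X%:R + b) * ('C(X,s.+1))%:R
  = (a - b + (s.+1)%:R) * ('C(X,s.+1))%:R + (s%:R + a) * ('C(X,s))%:R.
Proof.
have h : (X * 'C(X,s))%:R = (s.+1 * 'C(X,s.+1) + s * 'C(X,s))%:R :> rat by rewrite ibin.
rewrite !natrD !natrM in h.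
rewrite binS natrD.
refine (lin_hyp _ _ _ _ h _); ring.
Qed.

Definition bb (N j s : nat) : rat :=
  - (N`!)%:R * ('C(2*N+j, 2*N+2-s))%:R / ('C(2*N+j, N.+1))%:R.

Definition pp (N j h : nat) : rat := \sum_(0 <= s < N.+2) bb N j s * ('C(h.+1, s))%:R.

Lemma bbrel N j s : (1 <= j)%N -> (s <= N.+1)%N ->
  bb N j s * ((2*N+2)%:R - s%:R) = bb N j s.+1 * (s%:R + j%:R - 1).
Proof.
move=> hj hs; rewrite /bb.
have h := mul_bin_left (2*N+j) (2*N+1-s).
rewrite (_ : (2 * N + 1 - s).+1 = 2*N+2-s)%N in h; last lia.
rewrite (_ : (2 * N + j - (2 * N + 1 - s) = s + j - 1)%N) in h; last lia.
rewrite (_ : (2 * N + 2 - s.+1 = 2 * N + 1 - s)%N); last lia.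
have h' : ((2*N+2-s) * 'C(2*N+j,2*N+2-s))%:R = ((s+j-1) * 'C(2*N+j,2*N+1-s))%:R :> rat by rewrite h.
rewrite !natrM !natrB in h'; try lia.
rewrite !natrD in h'.
have hC : ('C(2*N+j,N.+1))%:R != 0 :> rat by rewrite pnatr_eq0 -lt0n bin_gt0; lia.
clear h; move: hC h'; move: ('C(2*N+j,N.+1))%:R ('C(2*N+j,2*N+2-s))%:R ('C(2*N+j,2*N+1-s))%:R => c x y hc h'.
rewrite natrD natrM.
refine (lin_hypk _ _ _ _ (- (N`!)%:R / c) h' _); fsolve.
Qed.

Lemma gos2 N j h : (1 <= j)%N ->
  pp N j h.+1 * (h + j)%:R - pp N j h * (h + j + 2*N + 2)%:R
  = ((N.+1)`!)%:R * ('C(h.+1, N.+1))%:R.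
Proof.
move=> hj.
pose U t := bb N j t.+1 * (t%:R + j%:R - 1) * ('C(h.+1, t))%:R.
pose V s := if s is t.+1 then U t else 0.
have e : pp N j h.+1 * (h + j)%:R - pp N j h * (h + j + 2*N + 2)%:R
   = \sum_(0 <= s < N.+2) - (V s.+1 - V s).
  rewrite /pp !mulr_suml -sumrB; apply: eq_big_nat => s /andP [_ hs].
  case: s hs => [|t] hs.
    have r := bbrel N j 0 hj (leq0n _).
    rewrite /V /U /= !bin0 !mulr1 subr0 in r *.
    rewrite -r; fsolve.
  have hle : (t.+1 <= N.+1)%N by lia.
  have r := bbrel N j t.+1 hj hle.
  have p := pgen h.+1 (j%:R - 1) ((2*N+j+1)%:R) t.
  rewrite /V /U.
  rewrite (_ : (h + j)%:R = (h.+1)%:R + (j%:R - 1) :> rat); last by rewrite !natrD; ring.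
  rewrite (_ : (h + j + 2 * N + 2)%:R = (h.+1)%:R + (2*N+j+1)%:R :> rat); last by rewrite !natrD; ring.
  rewrite (_ : forall (b u v x y : rat), b * x * u - b * y * v = b * (u * x - v * y)); last by move=> *; ring.
  rewrite p.
  refine (lin_hypk _ _ _ _ (- ('C(h.+1,t.+1))%:R) r _); ring.
rewrite e sumrN telescope_sumr // /V /U.
have h1 := mul_bin_left (2*N+j) N.
rewrite (_ : (2 * N + j - N = N + j)%N) in h1; last lia.
have h2 : (N.+1 * 'C(2*N+j,N.+1))%:R = ((N + j) * 'C(2*N+j,N))%:R :> rat by rewrite h1.
rewrite !natrM in h2.
rewrite /bb (_ : (2 * N + 2 - N.+2 = N)%N); last lia.
rewrite factSr.
have hC : ('C(2*N+j,N.+1))%:R != 0 :> rat by rewrite pnatr_eq0 -lt0n bin_gt0; lia.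
clear h1; move: hC h2; move: ('C(2*N+j,N.+1))%:R ('C(2*N+j,N))%:R ('C(h.+1,N.+1))%:R (N`!)%:R => c d x f hc h2.
rewrite (_ : d = (N.+1)%:R * c / (N + j)%:R); last by rewrite h2; fsolve.
fsolve.
Qed.

Definition GG (N j h : nat) : rat := pp N j h * ((h + j - 1)`!)%:R / ((h + j + 2*N + 1)`!)%:R.

Lemma Dsum N j : (1 <= j)%N ->
  \sum_(N <= h < (2*N + 1).+1)
     ((h + j - 1)`!)%:R * ((h.+1)`!)%:R / (((h - N)`!)%:R * ((2*N + j + h + 2)`!)%:R)
  = GG N j (2*N+2) - GG N j N.
Proof.
move=> hj.
rewrite (eq_big_nat _ _ (F2 := fun h => GG N j h.+1 - GG N j h)); last first.
  move=> h /andP [hN _].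
  have g := gos2 N j h hj.
  have e : pp N j h.+1 = (((N.+1)`!)%:R * ('C(h.+1, N.+1))%:R + pp N j h * (h + j + 2*N + 2)%:R)
     / (h + j)%:R by rewrite -g; fsolve.
  rewrite /GG e.
  have bf' : (('C(h.+1, N.+1) * ((N.+1)`! * (h - N)`!))%:R = ((h.+1)`!)%:R :> rat).
    by rewrite -(@bin_fact h.+1 N.+1 hN) subSS.
  rewrite natrM natrM in bf'; rewrite -bf'.
  rewrite (_ : (h.+1 + j - 1 = (h + j - 1).+1)%N); last lia.
  rewrite (_ : (h.+1 + j + 2 * N + 1 = (h + j + 2*N + 1).+1)%N); last lia.
  rewrite (_ : (2 * N + j + h + 2 = (h + j + 2*N + 1).+1)%N); last lia.
  rewrite !factSr (_ : ((h + j - 1).+1 = h + j)%N); last lia.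
  have := fact_neq0 (h + j - 1); have := fact_neq0 (h + j + 2*N + 1); have := fact_neq0 (h - N).
  have := fact_neq0 N.+1.
  move: (pp N j h) ((h + j - 1)`!)%:R ((h + j + 2*N + 1)`!)%:R ((h - N)`!)%:R ((N.+1)`!)%:R ('C(h.+1, N.+1))%:R
    => p a b c d x hd hc hb ha.
  fsolve.
rewrite telescope_sumr; last lia.
by rewrite (_ : ((2*N+1).+1 = 2*N+2)%N); last lia.
Qed.

Lemma epsT N j m : (1 <= j)%N -> (m <= N)%N ->
  \sum_(0 <= r < m.+1) ((2*N + (2*N+j) + 3)%:R * ('C(2*N+j+1, r))%:R * ('C(2*N+1, r))%:R
     - (2*N+2)%:R * ('C(2*N+j, r))%:R * ('C(2*N+3, r.+1))%:R)
  = ((2*N+j+1)%:R - (2*N+2)%:R ^+ 2 / (m.+1)%:R) * ('C(2*N+1, m))%:R * ('C(2*N+j, m))%:R :> rat.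
Proof.
move=> hj; elim: m => [|m IH] hm.
  rewrite big_nat1 !bin0 bin1; fsolve.
rewrite big_nat_recr //= IH; last lia.
have R1 : ('C(2*N+1,m.+1))%:R = ((2*N+1)%:R - m%:R) * ('C(2*N+1,m))%:R / (m.+1)%:R :> rat.
  by rewrite -binNr; fsolve.
have R2 : ('C(2*N+j,m.+1))%:R = ((2*N+j)%:R - m%:R) * ('C(2*N+j,m))%:R / (m.+1)%:R :> rat.
  by rewrite -binNr; fsolve.
have R3 : ('C(2*N+j+1,m.+1))%:R = (2*N+j+1)%:R * ('C(2*N+j,m))%:R / (m.+1)%:R :> rat.
  have h : ((2*N+j).+1 * 'C(2*N+j,m))%:R = (m.+1 * 'C((2*N+j).+1,m.+1))%:R :> rat.
    by rewrite (mul_bin_diag (2*N+j).+1 m).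
  rewrite natrM natrM in h; rewrite addn1.
  refine (lin_hypk _ _ _ _ (- ((m.+1)%:R)^-1) h _); fsolve.
have R4 : ('C(2*N+3,m.+2))%:R = (2*N+3)%:R * (2*N+2)%:R * ('C(2*N+1,m))%:R / ((m.+1)%:R * (m.+2)%:R) :> rat.
  have h1 : ((2*N+3) * 'C(2*N+2,m.+1))%:R = (m.+2 * 'C(2*N+3,m.+2))%:R :> rat.
    have h := mul_bin_diag (2*N+3) m.+1.
    rewrite (_ : (2*N+3).-1 = 2*N+2)%N in h; last lia.
    by rewrite h.
  have h2 : ((2*N+2) * 'C(2*N+1,m))%:R = (m.+1 * 'C(2*N+2,m.+1))%:R :> rat.
    have h := mul_bin_diag (2*N+2) m.
    rewrite (_ : (2*N+2).-1 = 2*N+1)%N in h; last lia.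
    by rewrite h.
  rewrite natrM natrM in h1; rewrite natrM natrM in h2.
  have e2 : ('C(2*N+2,m.+1))%:R = (2*N+2)%:R * ('C(2*N+1,m))%:R / (m.+1)%:R :> rat.
    refine (lin_hypk _ _ _ _ (- ((m.+1)%:R)^-1) h2 _); fsolve.
  rewrite e2 in h1.
  refine (lin_hypk _ _ _ _ (- ((m.+2)%:R)^-1) h1 _); fsolve.
rewrite R1 R2 R3 R4.
have hM : (2*N+j)%:R - m%:R != 0 :> rat.
  by rewrite -natrB; [rewrite pnatr_eq0; lia | lia].
move: hM; move: ('C(2*N+1,m))%:R ('C(2*N+j,m))%:R => x y hM.
fsolve.
Qed.

Definition T1 N j : rat := \sum_(0 <= s < N.+1) ('C(2*N+j+1, s))%:R * ('C(2*N+1, s))%:R.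
Definition T2 N j : rat := \sum_(0 <= s < N.+2) ('C(2*N+j, 2*N+2-s))%:R * ('C(2*N+3, s))%:R.

Lemma full2 N j : \sum_(0 <= s < (2*N+2).+1) ('C(2*N+j, 2*N+2-s))%:R * ('C(2*N+3, s))%:R
  = ('C(2*N+3+(2*N+j), 2*N+2))%:R :> rat.
Proof.
rewrite -binomial.Vandermonde natr_sum big_mkord; apply: eq_bigr => i _.
by rewrite natrM mulrC.
Qed.

Lemma split2 N j : \sum_(0 <= s < (2*N+2).+1) ('C(2*N+j, 2*N+2-s))%:R * ('C(2*N+3, s))%:R
  = T2 N j + \sum_(0 <= r < N.+1) ('C(2*N+j, r))%:R * ('C(2*N+3, r.+1))%:R :> rat.
Proof.
rewrite (big_cat_nat (n := N.+2)) //=; last lia.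
congr (_ + _).
rewrite big_nat_rev /= -{1}(add0n N.+2) big_addn.
rewrite (_ : ((2 * N + 2).+1 - N.+2 = N.+1)%N); last lia.
apply: eq_big_nat => i /andP [_ hi].
rewrite (_ : (N.+2 + (2 * N + 2).+1 - (i + N.+2).+1 = 2*N+2-i)%N); last lia.
rewrite (_ : (2 * N + 2 - (2 * N + 2 - i) = i)%N); last lia.
rewrite -(bin_sub (_ : (i.+1 <= 2*N+3)%N)); last lia.
by rewrite (_ : (2 * N + 3 - i.+1 = 2 * N + 2 - i)%N); last lia.
Qed.

Lemma eps N j : (1 <= j)%N ->
  (2*N + (2*N+j) + 3)%:R * T1 N j + (2*N+2)%:R * T2 N j
  = (2*N+2)%:R * ('C(2*N+3+(2*N+j), 2*N+2))%:R
    + ((j%:R - (2*N+3)%:R) * ('C(2*N+1,N))%:R * ('C(2*N+j,N))%:R) :> rat.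
Proof.
move=> hj.
have h := epsT N j N hj (leqnn N).
rewrite sumrB in h.
have eA : \sum_(0 <= r < N.+1) (2*N + (2*N+j) + 3)%:R * ('C(2*N+j+1, r))%:R * ('C(2*N+1, r))%:R
   = (2*N + (2*N+j) + 3)%:R * T1 N j :> rat.
  by rewrite /T1 mulr_sumr; apply: eq_bigr => r _; ring.
have eB : \sum_(0 <= r < N.+1) (2*N+2)%:R * ('C(2*N+j, r))%:R * ('C(2*N+3, r.+1))%:R
   = (2*N+2)%:R * \sum_(0 <= r < N.+1) ('C(2*N+j, r))%:R * ('C(2*N+3, r.+1))%:R :> rat.
  by rewrite mulr_sumr; apply: eq_bigr => r _; ring.
rewrite eA eB in h.
rewrite -full2 split2.
move: h; move: (T1 N j) (T2 N j) (\sum_(0 <= r < N.+1) ('C(2*N+j, r))%:R * ('C(2*N+3, r.+1))%:R)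
  ('C(2*N+1,N))%:R ('C(2*N+j,N))%:R => t1 t2 t3 x y h.
refine (lin_hyp _ _ _ _ h _); fsolve.
Qed.


Lemma Cf n m : (m <= n)%N -> ('C(n,m))%:R = (n`!)%:R / ((m`!)%:R * ((n-m)`!)%:R) :> rat.
Proof.
move=> h; rewrite -(bin_fact h) natrM natrM.
have := fact_neq0 m; have := fact_neq0 (n-m).
move: (m`!)%:R ((n-m)`!)%:R => a b ha hb; fsolve.
Qed.

Lemma pp1 N j : pp N j (2*N+2) = - (N`!)%:R / ('C(2*N+j,N.+1))%:R * T2 N j.
Proof.
rewrite /pp /T2 mulr_sumr; apply: eq_bigr => s _.
by rewrite /bb (_ : ((2*N+2).+1 = 2*N+3)%N); [ring | lia].
Qed.

Lemma pp2 N j : pp N j N = - (N`!)%:R / ('C(2*N+j,N.+1))%:R * ('C(N.+1 + (2*N+j), 2*N+2))%:R.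
Proof.
have V := binomial.Vandermonde (N.+1) (2*N+j) (2*N+2).
rewrite -(big_mkord xpredT (fun s => 'C(N.+1,s) * 'C(2*N+j,2*N+2-s))) in V.
rewrite -V natr_sum.
rewrite (big_cat_nat (n := N.+2)) //=; last lia.
rewrite [X in _ = _ * (_ + X)]big1_seq ?addr0; last first.
  move=> s; rewrite mem_index_iota => /andP [_ /andP [hs _]].
  by rewrite bin_small ?mul0n.
rewrite /pp mulr_sumr; apply: eq_bigr => s _.
rewrite /bb natrM; ring.
Qed.

Theorem mainTheorem13 (N j : nat) (hj : (1 <= j)%N) :
  (-1) ^+ j.+1 * E N j / (((2*N + j)`!)%:R : rat) =
    (j - 1)%:R * ((2*N + 1)`!)%:R / ((4*N + j + 3)`!)%:R *
      (2 * ((2*N + 1)`!)%:R / ((N`!)%:R * ((N.+1)`!)%:R) - 2 ^+ (2*N + 2))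
  - ((2*N + 2)`!)%:R / ((4*N + j + 3)`!)%:R *
      (4 * ((2*N + 1)`!)%:R / ((N`!)%:R * ((N.+1)`!)%:R) + 2 ^+ (2*N + 3))
  - (j - 1)%:R * ((N + j - 1)`!)%:R * (N`!)%:R
      / (((2*N + j)`!)%:R * ((2*N + j + 1)`!)%:R)
  + 2 * (j - 1)%:R * ((2*N + 2)`!)%:R / (((2*N + j + 1)`!)%:R * ((N.+1)`!)%:R) *
      \sum_(N <= h < (2*N + 1).+1)
        ((h + j - 1)`!)%:R * ((h.+1)`!)%:R / (((h - N)`!)%:R * ((2*N + j + h + 2)`!)%:R).
Proof.
have hE := Esum N j hj.
rewrite /Sx in hE.
rewrite /E hE (Dsum N j hj) /GG pp1 pp2 /Phi /qq -/(T1 N j).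
have eT2 : T2 N j = ((2*N+2)%:R * ('C(2*N+3+(2*N+j), 2*N+2))%:R
    + (j%:R - (2*N+3)%:R) * ('C(2*N+1,N))%:R * ('C(2*N+j,N))%:R
    - (2*N + (2*N+j) + 3)%:R * T1 N j) / (2*N+2)%:R.
  by refine (lin_hypk _ _ _ _ (((2*N+2)%:R)^-1) (eps N j hj) _); fsolve.
rewrite eT2.
rewrite natrB // (Cf (2*N+1) N.+1); last lia.
rewrite (Cf (2*N+1) (N)); last lia.
rewrite (Cf (2*N+j) (N)); last lia.
rewrite (Cf (2*N+j) (N.+1)); last lia.
rewrite (Cf (N.+1 + (2*N+j)) (2*N+2)); last lia.
rewrite (Cf (2*N+3+(2*N+j)) (2*N+2)); last lia.
rewrite (_ : (2*N+1 - N.+1 = N)%N); last lia.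
rewrite (_ : (2*N+1 - N = N.+1)%N); last lia.
rewrite (_ : (2*N+j - N = (N+j-1).+1)%N); last lia.
rewrite (_ : (2*N+j - N.+1 = N+j-1)%N); last lia.
rewrite (_ : (N.+1 + (2*N+j) = 3*N+j+1)%N); last lia.
rewrite (_ : (3*N+j+1 - (2*N+2) = N+j-1)%N); last lia.
rewrite (_ : (2*N+3+(2*N+j) - (2*N+2) = (2*N+j).+1)%N); last lia.
rewrite (_ : (2*N+3+(2*N+j) = (4*N+j+2).+1)%N); last lia.
rewrite (_ : (2*N+1+2*N+j+1 = 4*N+j+2)%N); last lia.
rewrite (_ : (4*N+j+3 = (4*N+j+2).+1)%N); last lia.
rewrite (_ : (2*N+2+j-1 = (2*N+j).+1)%N); last lia.
rewrite (_ : (2*N+j+1 = (2*N+j).+1)%N); last lia.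
rewrite (_ : (2*N+2+j+2*N+1 = (4*N+j+2).+1)%N); last lia.
rewrite (_ : (N+j+2*N+1 = 3*N+j+1)%N); last lia.
rewrite (_ : (2*N+2 = (2*N+1).+1)%N); last lia.
rewrite (factSr (4*N+j+2)) (factSr (2*N+j)) (factSr (2*N+1)) (factSr N) (factSr (N+j-1)).
rewrite (_ : ((N+j-1).+1 = N+j)%N); last lia.
rewrite (_ : (2*N+3 = (2*N+1).+2)%N); last lia.
rewrite (exprD (-1 : rat) N j) (exprS (-1 : rat) j) (exprS (-1 : rat) N).
rewrite (exprS (2 : rat) (2*N+1).+1) (exprS (2 : rat) (2*N+1)).
have hc : ('C((2*N+j).+1, j-1))%:R != 0 :> rat by rewrite pnatr_eq0 -lt0n bin_gt0; lia.
have := fact_neq0 N; have := fact_neq0 (2*N+1); have := fact_neq0 (2*N+j);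
have := fact_neq0 (N+j-1); have := fact_neq0 (4*N+j+2); have := fact_neq0 (3*N+j+1).
move: hc.
move: ('C((2*N+j).+1, j-1))%:R ((N`!)%:R) ((2*N+1)`!)%:R ((2*N+j)`!)%:R ((N+j-1)`!)%:R
  ((4*N+j+2)`!)%:R ((3*N+j+1)`!)%:R (T1 N j) (2 ^+ (2*N+1) : rat)
  => c fN f1 fM fj f4 f3 t p hc h3 h4 hj1 hM h1 hN.
rewrite -[(-1)^+j]signr_odd -[(-1)^+N]signr_odd.
case: (odd j); case: (odd N); rewrite /= ?expr0 ?expr1.
all: fsolve.
Qed.
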